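(* Assume Condition B holds and let $\pi^{\delta_s}$ be the stationary distribution of the returned process $X^{\delta_s}$ (which is returned to the state $s$ whenever $X$ would hit $0$). Then $$\sum_{k\in C}\pi^{\delta_s}(k)\,q_{k0}=\frac{1-p_s}{T_s}.$$
   Context: $X$ is a stable, conservative, non-explosive pure jump Markov process on a countable state space $C\cup\{0\}$, where $0$ is an absorbing (cemetery) state and $C$ is a single irreducible transient class, with infinitesimal matrix $Q=(q_{ij})$. For a probability distribution $\mu$ on $C$, the returned process $X^\mu$ is the Markov process on $C$ with rates $q^\mu_{ij}=q_{ij}+q_{i0}\mu_j$, $i,j\in C$; $\delta_s$ is the point mass at $s$. For a set $A$, $\tau_A:=\inf\{t>0: X(t)\in A,\ X(u)\notin A\text{ for some }u<t\}$; $\mathbb{P}_k,\mathbb{E}_k$ refer to $X(0)=k$. Condition B: there is $s\in C$ such that, with $p_k:=\mathbb{P}_k[X(\tau_{\{s,0\}})=s]$ and $T_k:=\mathbb{E}_k[\tau_{\{s,0\}}]$, (i) $\inf_{k\in C}p_k=p>0$ and (ii) $T_k<\infty$ for all $k\in C$. *)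

(* Defs.v *)
(* classical real numbers. No measure theory is available,
   so the probabilistic quantities are expressed through the embedded jump
   chain as (unordered, nonnegative) sums over finite paths. *)
From Stdlib Require Import Reals Lra List Bool Arith ClassicalEpsilon.
Import ListNotations.
Open Scope R_scope.

Inductive ereal : Type := Fin (r : R) | Inf.

Definition finsums {A : Type} (f : A -> R) (r : R) : Prop :=
  exists l : list A, NoDup l /\ r = fold_right (fun a acc => f a + acc) 0 l.

Lemma finsums_ne {A : Type} (f : A -> R) : exists r, finsums f r.
Proof. exists 0. exists (@nil A). split; [constructor | reflexivity]. Qed.

Definition nnsum {A : Type} (f : A -> R) : ereal :=
  match excluded_middle_informative (bound (finsums f)) with
  | left H => Fin (proj1_sig (completeness (finsums f) H (finsums_ne f)))
  | right _ => Inf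
  end.

(* State space C ∪ {0}, encoded in nat: 0 is the cemetery, C = {n | inC n}. *)
Definition inS (inC : nat -> bool) (j : nat) : bool := (j =? 0)%nat || inC j.

Definition qtot (q : nat -> nat -> R) (i : nat) : R := - q i i.

Definition jumpP (q : nat -> nat -> R) (i j : nat) : R :=
  if (i =? j)%nat then 0 else q i j / qtot q i.

(* Probability that the jump chain started at k follows the path l = [x1;...;xn]. *)
Fixpoint pathw (q : nat -> nat -> R) (k : nat) (l : list nat) : R :=
  match l with
  | [] => 1
  | x :: l' => jumpP q k x * pathw q x l'
  end.

(* Sum of the mean holding times 1/q_{x_0} + ... + 1/q_{x_{n-1}} along the
   path k = x0, x1, ..., xn (conditional expectation of the elapsed time). *)
Fixpoint pathtime (q : nat -> nat -> R) (k : nat) (l : list nat) : R :=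
  match l with
  | [] => 0
  | x :: l' => / qtot q k + pathtime q x l'
  end.

Fixpoint hits (allowed target : nat -> bool) (l : list nat) : bool :=
  match l with
  | [] => false
  | [x] => target x
  | x :: l' => allowed x && hits allowed target l'
  end.

(* P_k[ the chain, after leaving k, enters 'target' (at a jump time) while
   staying in 'allowed' before ] *)
Definition hitprob (q : nat -> nat -> R) (allowed target : nat -> bool) (k : nat)
  : ereal :=
  nnsum (fun l : list nat => if hits allowed target l then pathw q k l else 0).

(* Region strictly before τ_{ {s,0} }: states of C other than s. *)
Definition avoid_s (inC : nat -> bool) (s : nat) (x : nat) : bool :=
  inC x && negb (x =? s)%nat.

(* p_k := P_k[ X(τ_{s,0}) = s ] *)
Definition p_hit (q : nat -> nat -> R) (inC : nat -> bool) (s k : nat) : ereal :=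
  hitprob q (avoid_s inC s) (fun x => (x =? s)%nat) k.

(* P_k[ τ_{s,0} < ∞ ] *)
Definition p_term (q : nat -> nat -> R) (inC : nat -> bool) (s k : nat) : ereal :=
  hitprob q (avoid_s inC s) (fun x => (x =? s)%nat || (x =? 0)%nat) k.

(* E_k[ τ_{s,0} ; τ_{s,0} < ∞ ] *)
Definition m_term (q : nat -> nat -> R) (inC : nat -> bool) (s k : nat) : ereal :=
  nnsum (fun l : list nat =>
    if hits (avoid_s inC s) (fun x => (x =? s)%nat || (x =? 0)%nat) l
    then pathw q k l * pathtime q k l else 0).

(* T_k := E_k[ τ_{s,0} ]  (= +∞ if τ_{s,0} = ∞ with positive probability) *)
Definition T_hit (q : nat -> nat -> R) (inC : nat -> bool) (s k : nat) : ereal :=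
  match excluded_middle_informative (p_term q inC s k = Fin 1) with
  | left _ => m_term q inC s k
  | right _ => Inf
  end.

Definition p_return (q : nat -> nat -> R) (inC : nat -> bool) (i : nat) : ereal :=
  hitprob q (fun x => inC x && negb (x =? i)%nat) (fun x => (x =? i)%nat) i.

Fixpoint pospath (q : nat -> nat -> R) (inC : nat -> bool) (k : nat) (l : list nat)
  : Prop :=
  match l with
  | [] => True
  | x :: l' => k <> x /\ inS inC x = true /\ 0 < q k x /\ pospath q inC x l'
  end.

Definition leads (q : nat -> nat -> R) (inC : nat -> bool) (i j : nat) : Prop :=
  exists l, pospath q inC i l /\ last (i :: l) i = j.

(* Standing assumptions: Q is a stable conservative rate matrix on C ∪ {0},
   0 is absorbing, C is a single irreducible transient class, and the process
   is non-explosive (Reuter's criterion: Qx = x, 0 <= x <= 1 forces x = 0). *)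
Definition standing (q : nat -> nat -> R) (inC : nat -> bool) : Prop :=
  inC 0%nat = false /\
  (forall i j, i <> j -> inS inC i = true -> inS inC j = true -> 0 <= q i j) /\
  (forall i, inS inC i = true ->
     nnsum (fun j => if inS inC j && negb (j =? i)%nat then q i j else 0)
     = Fin (- q i i)) /\
  (forall j, q 0%nat j = 0) /\
  (forall i j, inC i = true -> inC j = true -> leads q inC i j) /\
  (forall i, inC i = true -> exists r, p_return q inC i = Fin r /\ r < 1) /\
  (forall x : nat -> R,
     (forall i, inS inC i = true -> 0 <= x i <= 1) ->
     (forall i, inS inC i = true ->
        nnsum (fun j => if inS inC j && negb (j =? i)%nat then q i j * x j else 0)
        = Fin (x i - q i i * x i)) ->
     forall i, inS inC i = true -> x i = 0).

Definition conditionB (q : nat -> nat -> R) (inC : nat -> bool) (s : nat) : Prop :=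
  inC s = true /\
  (exists p, 0 < p /\ (forall k, inC k = true -> exists pk, p_hit q inC s k = Fin pk /\ p <= pk)
     /\ (forall e, 0 < e -> exists k, inC k = true /\
           exists pk, p_hit q inC s k = Fin pk /\ pk < p + e)) /\
  (forall k, inC k = true -> T_hit q inC s k <> Inf).

(* Rates of the returned process X^mu on C *)
Definition qret (q : nat -> nat -> R) (mu : nat -> R) (i j : nat) : R :=
  q i j + q i 0%nat * mu j.

Definition dirac (s : nat) (j : nat) : R := if (j =? s)%nat then 1 else 0.

Definition stationary (inC : nat -> bool) (q' : nat -> nat -> R) (pi : nat -> R) : Prop :=
  (forall k, inC k = true -> 0 <= pi k) /\
  nnsum (fun k => if inC k then pi k else 0) = Fin 1 /\
  (forall j, inC j = true ->
     nnsum (fun i => if inC i && negb (i =? j)%nat then pi i * q' i j else 0)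
     = Fin (- (pi j * q' j j))).

(* Main.v *)
Require Import Defs.
From Stdlib Require Import Reals.
From Stdlib Require Import Lra Lia List Bool Arith ClassicalEpsilon FunctionalExtensionality.
Import ListNotations.
Open Scope R_scope.

Definition fs {A : Type} (f : A -> R) (l : list A) : R :=
  fold_right (fun a acc => f a + acc) 0 l.

Definition ubs {A : Type} (f : A -> R) (M : R) : Prop :=
  forall l, NoDup l -> fs f l <= M.

Definition cdec {T : Type} (x y : T) : {x = y} + {x <> y} :=
  excluded_middle_informative (x = y).

Lemma fs_nil {A} (f : A -> R) : fs f [] = 0.
Proof. reflexivity. Qed.
Lemma fs_cons {A} (f : A -> R) a l : fs f (a :: l) = f a + fs f l.
Proof. reflexivity. Qed.
Lemma fs_app {A} (f : A -> R) l1 l2 : fs f (l1 ++ l2) = fs f l1 + fs f l2.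
Proof. induction l1; simpl; rewrite ?fs_cons; unfold fs in *; simpl in *; lra. Qed.
Lemma fs_plus {A} (f g : A -> R) l : fs (fun a => f a + g a) l = fs f l + fs g l.
Proof. induction l; unfold fs in *; simpl; lra. Qed.
Lemma fs_scal {A} (f : A -> R) c l : fs (fun a => c * f a) l = c * fs f l.
Proof. induction l; unfold fs in *; simpl; try rewrite IHl; ring. Qed.
Lemma fs_ext {A} (f g : A -> R) l : (forall a, In a l -> f a = g a) -> fs f l = fs g l.
Proof. induction l; intros H; unfold fs in *; simpl; auto.
  rewrite H by (left; auto). rewrite IHl; auto. intros; apply H; right; auto. Qed.
Lemma fs_le {A} (f g : A -> R) l : (forall a, In a l -> f a <= g a) -> fs f l <= fs g l.
Proof. induction l; intros H; unfold fs in *; simpl; try lra.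
  assert (f a <= g a) by (apply H; left; auto).
  assert (fold_right (fun a0 acc => f a0 + acc) 0 l <= fold_right (fun a0 acc => g a0 + acc) 0 l)
   by (apply IHl; intros; apply H; right; auto). lra. Qed.
Lemma fs_nonneg {A} (f : A -> R) l : (forall a, 0 <= f a) -> 0 <= fs f l.
Proof. intros H; induction l; unfold fs in *; simpl; try lra. specialize (H a); lra. Qed.
Lemma fs_map {A B} (f : B -> R) (phi : A -> B) l : fs f (map phi l) = fs (fun a => f (phi a)) l.
Proof. induction l; unfold fs in *; simpl; auto. rewrite IHl; auto. Qed.
Lemma fs_filter {A} (f : A -> R) (p : A -> bool) l :
  fs f (filter p l) = fs (fun a => if p a then f a else 0) l.
Proof. induction l; unfold fs in *; simpl; auto. destruct (p a); simpl; rewrite IHl; ring. Qed.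

Lemma fs_sub {A} (f : A -> R) (L K : list A) :
  NoDup L -> NoDup K -> (forall a, In a L -> f a <> 0 -> In a K) -> (forall a, 0 <= f a) ->
  fs f L <= fs f K.
Proof.
  intros HL; revert K; induction HL as [|a L Ha HL IH]; intros K HK Hin Hpos.
  - rewrite fs_nil; apply fs_nonneg; auto.
  - rewrite fs_cons. destruct (Req_dec (f a) 0) as [E|E].
    + rewrite E. specialize (IH K HK). assert (fs f L <= fs f K); [|lra].
      apply IH; auto. intros; apply Hin; auto; right; auto.
    + assert (Hk : In a K) by (apply Hin; auto; left; auto).
      destruct (in_split a K Hk) as [K1 [K2 ->]].
      assert (HK' := NoDup_remove _ _ _ HK). destruct HK' as [HK1 HK2].
      rewrite fs_app, fs_cons.
      assert (fs f L <= fs f (K1 ++ K2)); [|rewrite fs_app in H; lra].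
      apply IH; auto. intros b Hb Hfb.
      assert (In b (K1 ++ a :: K2)) by (apply Hin; auto; right; auto).
      apply in_app_or in H. apply in_or_app. destruct H as [H|[H|H]]; auto.
      subst; contradiction.
Qed.

Lemma fs_indic {A B} (key : A -> B) (c : R) a (K : list B) :
  NoDup K -> In (key a) K -> fs (fun b => if cdec (key a) b then c else 0) K = c.
Proof.
  intros HK Hin. destruct (in_split _ _ Hin) as [K1 [K2 E]]. subst K.
  destruct (NoDup_remove _ _ _ HK) as [_ Hn].
  rewrite fs_app, fs_cons.
  assert (Z : forall l : list B, fs (fun _ => 0) l = 0) by (induction l; unfold fs in *; simpl; lra).
  assert (E1 : fs (fun b => if cdec (key a) b then c else 0) K1 = 0).
  { rewrite <- (Z K1). apply fs_ext. intros b Hb; destruct (cdec (key a) b); auto; subst; exfalso; apply Hn; apply in_or_app; auto. }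
  assert (E2 : fs (fun b => if cdec (key a) b then c else 0) K2 = 0).
  { rewrite <- (Z K2). apply fs_ext. intros b Hb; destruct (cdec (key a) b); auto; subst; exfalso; apply Hn; apply in_or_app; auto. }
  rewrite E1, E2. destruct (cdec (key a) (key a)); [lra|congruence].
Qed.

Lemma fs_group {A B} (f : A -> R) (key : A -> B) (L : list A) (K : list B) :
  NoDup K -> (forall a, In a L -> In (key a) K) ->
  fs f L = fs (fun b => fs (fun a => if cdec (key a) b then f a else 0) L) K.
Proof.
  intros HK; induction L as [|a L IH]; intros Hin.
  - rewrite fs_nil. clear HK Hin. induction K; unfold fs in *; simpl in *; auto; lra.
  - rewrite fs_cons. 
    rewrite (fs_ext _ (fun b => (if cdec (key a) b then f a else 0) +
       fs (fun a0 => if cdec (key a0) b then f a0 else 0) L)).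
    2:{ intros; rewrite fs_cons; reflexivity. }
    rewrite fs_plus, fs_indic; auto. rewrite IH; auto.
    intros; apply Hin; right; auto. apply Hin; left; auto.
Qed.

Lemma ubs_iff {A} (f : A -> R) M : ubs f M <-> is_upper_bound (finsums f) M.
Proof. split.
  - intros H r [l [Hl ->]]. apply H; auto.
  - intros H l Hl. apply H. exists l; split; auto.
Qed.

Lemma lub_unique E a b : is_lub E a -> is_lub E b -> a = b.
Proof. intros [H1 H2] [H3 H4]. apply Rle_antisym; auto. Qed.

Lemma nnsum_lub {A} (f : A -> R) r : is_lub (finsums f) r -> nnsum f = Fin r.
Proof.
  intros H. unfold nnsum. destruct excluded_middle_informative as [Hb|Hb].
  - destruct completeness as [x Hx]; simpl. f_equal. eapply lub_unique; eauto.
  - exfalso; apply Hb. exists r; apply H.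
Qed.

Lemma nnsum_fin {A} (f : A -> R) r : nnsum f = Fin r -> is_lub (finsums f) r.
Proof.
  unfold nnsum. destruct excluded_middle_informative as [Hb|Hb]; intros E; [|discriminate].
  destruct completeness as [x Hx]; simpl in E. injection E; intros; subst; auto.
Qed.

Lemma nnsum_ubs {A} (f : A -> R) r : nnsum f = Fin r -> ubs f r.
Proof. intros H; apply ubs_iff, nnsum_fin; auto. Qed.

Lemma nnsum_least {A} (f : A -> R) r M : nnsum f = Fin r -> ubs f M -> r <= M.
Proof. intros H H'; apply (nnsum_fin _ _ H). apply ubs_iff; auto. Qed.

Lemma nnsum_approx {A} (f : A -> R) r e : nnsum f = Fin r -> 0 < e ->
  exists l, NoDup l /\ r - e < fs f l.
Proof.
  intros H He. apply NNPP; intros C.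
  assert (ubs f (r - e)).
  { intros l Hl. apply Rnot_lt_le. intros C'. apply C; eauto. }
  assert (r <= r - e) by (eapply nnsum_least; eauto). lra.
Qed.

Lemma nnsum_same {A B} (f : A -> R) (g : B -> R) :
  (forall M, ubs f M <-> ubs g M) -> nnsum f = nnsum g.
Proof.
  intros H. unfold nnsum at 1.
  destruct excluded_middle_informative as [Hb|Hb].
  - destruct completeness as [x Hx]; simpl. symmetry. apply nnsum_lub.
    split.
    + apply ubs_iff, H, ubs_iff, Hx.
    + intros b Hb'. apply Hx. apply ubs_iff, H, ubs_iff; auto.
  - unfold nnsum. destruct excluded_middle_informative as [Hb'|Hb']; auto.
    exfalso. apply Hb. destruct Hb' as [M HM]. exists M. apply ubs_iff, H, ubs_iff; auto.
Qed.

Lemma nnsum_ext {A} (f g : A -> R) : (forall a, f a = g a) -> nnsum f = nnsum g.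
Proof. intros H. f_equal. apply functional_extensionality; auto. Qed.

Lemma nnsum_ub_fin {A} (f : A -> R) M : ubs f M -> exists r, nnsum f = Fin r /\ r <= M.
Proof.
  intros H. unfold nnsum. destruct excluded_middle_informative as [Hb|Hb].
  - destruct completeness as [x Hx]; simpl. exists x; split; auto. apply Hx. apply ubs_iff; auto.
  - exfalso; apply Hb; exists M; apply ubs_iff; auto.
Qed.

Lemma nnsum_fin_nonneg {A} (f : A -> R) r : nnsum f = Fin r -> 0 <= r.
Proof. intros H. apply (nnsum_ubs _ _ H [] (NoDup_nil _)). Qed.

Lemma nnsum_term_le {A} (f : A -> R) r a : (forall a, 0 <= f a) -> nnsum f = Fin r -> f a <= r.
Proof. intros Hp H. assert (Hu := nnsum_ubs _ _ H [a]). 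
  assert (fs f [a] <= r) by (apply Hu; constructor; auto; constructor).
  unfold fs in H0; simpl in H0; lra. Qed.

Lemma nnsum_le_fin {A} (f g : A -> R) r : (forall a, f a <= g a) -> nnsum g = Fin r ->
  exists r', nnsum f = Fin r' /\ r' <= r.
Proof.
  intros Hle H. apply nnsum_ub_fin. intros l Hl.
  apply Rle_trans with (fs g l); [apply fs_le; auto|]. apply (nnsum_ubs _ _ H); auto.
Qed.

Lemma nnsum_fs {A} (f : A -> R) K : NoDup K -> (forall a, ~ In a K -> f a = 0) ->
  (forall a, 0 <= f a) -> nnsum f = Fin (fs f K).
Proof.
  intros HK Hz Hp. apply nnsum_lub. split.
  - apply ubs_iff. intros l Hl. apply fs_sub; auto.
    intros a _ Ha. apply NNPP; intros C; apply Ha; auto.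
  - intros b Hb. apply Hb. exists K; auto.
Qed.

Lemma nnsum_zero {A} (f : A -> R) : (forall a, f a = 0) -> nnsum f = Fin 0.
Proof. intros H. rewrite (nnsum_fs f []). reflexivity. constructor. auto. intros; rewrite H; lra. Qed.

Lemma nnsum_single {A} (f : A -> R) a0 : (forall a, a <> a0 -> f a = 0) -> 0 <= f a0 ->
  nnsum f = Fin (f a0).
Proof.
  intros H H0. rewrite (nnsum_fs f [a0]). unfold fs; simpl; f_equal; ring.
  repeat constructor; auto. intros a Ha; apply H; intros ->; apply Ha; left; auto.
  intros a; destruct (cdec a a0); subst; auto. rewrite H; auto; lra.
Qed.

Lemma nnsum_scal {A} (f : A -> R) c r : 0 <= c -> nnsum f = Fin r ->
  nnsum (fun a => c * f a) = Fin (c * r).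
Proof.
  intros Hc H. apply nnsum_lub. split.
  - apply ubs_iff. intros l Hl. rewrite fs_scal. apply Rmult_le_compat_l; auto.
    apply (nnsum_ubs _ _ H); auto.
  - intros M HM. apply ubs_iff in HM.
    destruct (Req_dec c 0) as [E|E].
    + subst. specialize (HM [] (NoDup_nil _)). unfold fs in HM; simpl in HM; lra.
    + assert (r <= M / c).
      { eapply nnsum_least; eauto. intros l Hl. specialize (HM l Hl). rewrite fs_scal in HM.
        apply (Rmult_le_reg_l c); [lra|]. field_simplify; lra. }
      apply (Rmult_le_compat_l c) in H0; [|lra]. field_simplify in H0; lra.
Qed.

Lemma nnsum_add {A} (f g : A -> R) a b : (forall x, 0 <= f x) -> (forall x, 0 <= g x) ->
  nnsum f = Fin a -> nnsum g = Fin b -> nnsum (fun x => f x + g x) = Fin (a + b).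
Proof.
  intros Hf Hg Ha Hb. apply nnsum_lub. split.
  - apply ubs_iff. intros l Hl. rewrite fs_plus.
    assert (fs f l <= a) by (apply (nnsum_ubs _ _ Ha); auto).
    assert (fs g l <= b) by (apply (nnsum_ubs _ _ Hb); auto). lra.
  - intros M HM. apply ubs_iff in HM. apply Rnot_lt_le; intros C.
    set (e := (a + b - M) / 2).
    destruct (nnsum_approx f a e Ha) as [l1 [H1 H1']]. unfold e; lra.
    destruct (nnsum_approx g b e Hb) as [l2 [H2 H2']]. unfold e; lra.
    set (l := nodup cdec (l1 ++ l2)).
    assert (Hl : NoDup l) by apply NoDup_nodup.
    specialize (HM l Hl). rewrite fs_plus in HM.
    assert (fs f l1 <= fs f l).
    { apply fs_sub; auto. intros x Hx _. apply nodup_In, in_or_app; auto. }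
    assert (fs g l2 <= fs g l).
    { apply fs_sub; auto. intros x Hx _. apply nodup_In, in_or_app; auto. }
    unfold e in *; lra.
Qed.

Lemma nnsum_sub {A} (f g : A -> R) a b : (forall x, 0 <= g x) -> (forall x, g x <= f x) ->
  nnsum f = Fin a -> nnsum g = Fin b -> nnsum (fun x => f x - g x) = Fin (a - b).
Proof.
  intros Hg Hle Ha Hb.
  destruct (nnsum_le_fin (fun x => f x - g x) f a) as [c [Hc _]]; auto.
  { intros x; specialize (Hg x); lra. }
  assert (E := nnsum_add g (fun x => f x - g x) b c Hg ltac:(intros x; specialize (Hle x); lra) Hb Hc).
  rewrite (nnsum_ext _ f) in E by (intros; ring). rewrite Ha in E. injection E; intros.
  rewrite Hc; f_equal; lra.
Qed.


Lemma nnsum_block {A B} (f : A -> R) (key : A -> B) (g : B -> R) :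
  (forall a, 0 <= f a) ->
  (forall b, nnsum (fun a => if cdec (key a) b then f a else 0) = Fin (g b)) ->
  nnsum f = nnsum g.
Proof.
  intros Hp Hg. apply nnsum_same. intros M; split.
  - intros H K HK.
    assert (Hc : forall e, 0 < e -> exists L, NoDup L /\ (forall a, In a L -> In (key a) K) /\
               fs g K - e <= fs f L).
    { clear H. induction HK as [|b K Hb HK IH]; intros e He.
      - exists []; split; [constructor|split; [intros a []|rewrite !fs_nil; lra]].
      - destruct (IH (e/2)) as [L' [HL' [HkL' HfL']]]; [lra|].
        destruct (nnsum_approx _ _ (e/2) (Hg b)) as [Lb [HLb HfLb]]; [lra|].
        set (Lb' := filter (fun a => if cdec (key a) b then true else false) Lb).
        exists (Lb' ++ L'). repeat split.
        + apply NoDup_app; auto. apply NoDup_filter; auto.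
          intros a Ha Ha'. unfold Lb' in Ha. apply filter_In in Ha. destruct Ha as [_ Ha].
          destruct (cdec (key a) b); try discriminate. subst. apply Hb. apply HkL'; auto.
        + intros a Ha. apply in_app_or in Ha. destruct Ha as [Ha|Ha].
          * unfold Lb' in Ha. apply filter_In in Ha. destruct Ha as [_ Ha].
            destruct (cdec (key a) b); try discriminate. left; auto.
          * right; auto.
        + rewrite fs_app, fs_cons. unfold Lb'. rewrite fs_filter.
          assert (fs (fun a => if (if cdec (key a) b then true else false) then f a else 0) Lb =
                  fs (fun a => if cdec (key a) b then f a else 0) Lb).
          { apply fs_ext; intros; destruct (cdec (key a) b); auto. }
          lra. }
    apply Rnot_lt_le; intros C.
    destruct (Hc ((fs g K - M)/2)) as [L [HL [_ HfL]]]; [lra|].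
    specialize (H L HL). lra.
  - intros H L HL.
    set (K := nodup cdec (map key L)).
    rewrite (fs_group f key L K).
    + apply Rle_trans with (fs g K).
      * apply fs_le. intros b _. apply (nnsum_ubs _ _ (Hg b)); auto.
      * apply H. apply NoDup_nodup.
    + apply NoDup_nodup.
    + intros a Ha. apply nodup_In. apply in_map; auto.
Qed.

Lemma nnsum_reindex {A B} (f : B -> R) (phi : A -> B) :
  (forall b, 0 <= f b) ->
  (forall a1 a2, phi a1 = phi a2 -> a1 = a2) ->
  (forall b, f b <> 0 -> exists a, phi a = b) ->
  nnsum f = nnsum (fun a => f (phi a)).
Proof.
  intros Hp Hinj Hsur. apply nnsum_same. intros M; split.
  - intros H L HL. rewrite <- fs_map. apply H. apply NoDup_map_NoDup_ForallPairs; auto. intros x y _ _; auto.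
  - intros H L HL.
    assert (exists L', NoDup L' /\ (forall a, In a L' -> In (phi a) L) /\
              fs (fun a => f (phi a)) L' = fs f L).
    { induction HL as [|b L Hb HL IH].
      - exists []; repeat split; auto. constructor.
      - destruct IH as [L' [H1 [H2 H3]]].
        destruct (Req_dec (f b) 0) as [E|E].
        + exists L'; repeat split; auto. intros a Ha; right; auto.
          rewrite fs_cons, E, H3; ring.
        + destruct (Hsur b E) as [a Ha]. exists (a :: L'); repeat split.
          * constructor; auto. intros Hin. apply Hb. rewrite <- Ha. apply H2; auto.
          * intros a' [<-|Ha']; [left; auto| right; auto].
          * rewrite !fs_cons, H3, Ha; auto. }
    destruct H0 as [L' [H1 [_ H3]]]. rewrite <- H3. apply H; auto.
Qed.


Lemma last_default {A} (x : A) l d1 d2 : last (x :: l) d1 = last (x :: l) d2.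
Proof. revert x; induction l; intros x; auto. change (last (a :: l) d1 = last (a :: l) d2). auto. Qed.

Lemma last_in {A} (x : A) l d : In (last (x :: l) d) (x :: l).
Proof. revert x; induction l; intros x. simpl; auto.
  change (In (last (a :: l) d) (x :: a :: l)). right; auto. Qed.

Lemma hits_nil A T : hits A T [] = false.
Proof. reflexivity. Qed.

Lemma andb_assoc_rev_helper (a b c : bool) : (a && b) && c = a && (b && c).
Proof. destruct a, b, c; reflexivity. Qed.

Lemma hits_app A T k r : r <> [] -> hits A T (k ++ r) = forallb A k && hits A T r.
Proof.
  intros Hr. induction k as [|a k IH]; auto.
  change (hits A T (a :: (k ++ r)) = (A a && forallb A k) && hits A T r).
  rewrite andb_assoc_rev_helper. rewrite <- IH. destruct (k ++ r) eqn:E.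
  - destruct k; destruct r; simpl in E; try discriminate; congruence.
  - reflexivity.
Qed.

Lemma hits_app1 A T k x : hits A T (k ++ [x]) = forallb A k && T x.
Proof. rewrite hits_app by discriminate. simpl. reflexivity. Qed.

Lemma pathw_app q k l1 l2 :
  pathw q k (l1 ++ l2) = pathw q k l1 * pathw q (last (k :: l1) k) l2.
Proof.
  revert k; induction l1 as [|x l1 IH]; intros k; simpl.
  - ring.
  - rewrite IH. rewrite (last_default x l1 x k). destruct l1; simpl; ring.
Qed.

Lemma hits_decomp A T l : hits A T l = true -> exists k x, l = k ++ [x] /\ forallb A k = true /\ T x = true.
Proof.
  intros H. assert (Hne : l <> []) by (intros ->; discriminate).
  rewrite (app_removelast_last 0%nat Hne) in H |- *.
  rewrite hits_app1 in H. apply andb_prop in H. destruct H.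
  eexists; eexists; split; eauto.
Qed.

Lemma hits_Forall A T (P : nat -> Prop) l : (forall x, A x = true -> P x) -> (forall x, T x = true -> P x) ->
  hits A T l = true -> Forall P l.
Proof.
  intros HA HT H. destruct (hits_decomp _ _ _ H) as [k [x [-> [H1 H2]]]].
  apply Forall_app; split.
  - apply Forall_forall. intros y Hy. apply HA. rewrite forallb_forall in H1; auto.
  - constructor; auto.
Qed.

Lemma pathtime_fs q k L :
  pathtime q k L = fs (fun n => / qtot q (last (k :: firstn n L) k)) (seq 0 (length L)).
Proof.
  revert k; induction L as [|x L IH]; intros k.
  - reflexivity.
  - simpl pathtime. simpl length. rewrite <- cons_seq. rewrite fs_cons.
    simpl firstn at 1. simpl last at 1. f_equal.
    rewrite <- seq_shift, fs_map. rewrite IH. apply fs_ext. intros n _.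
    simpl firstn. f_equal. f_equal. change (last (x :: firstn n L) x = last (x :: firstn n L) k). apply last_default.
Qed.


Lemma inv_nonneg x : 0 <= x -> 0 <= / x.
Proof. intros H. destruct (Req_dec x 0) as [->|E]. rewrite Rinv_0; lra.
  left; apply Rinv_0_lt_compat; lra. Qed.

Section Main.
Context (q : nat -> nat -> R) (inC : nat -> bool) (s : nat) (pi : nat -> R).
Context (Hstd : standing q inC) (HB : conditionB q inC s)
        (Hpi : stationary inC (qret q (dirac s)) pi).

Definition Sx x := avoid_s inC s x.
Definition Ex x := ((x =? s)%nat || (x =? 0)%nat).
Definition lst k := last (s :: k) s.

Lemma C0 : inC 0%nat = false.
Proof. apply Hstd. Qed.
Lemma Cs : inC s = true.
Proof. apply HB. Qed.
Lemma s_ne0 : s <> 0%nat.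
Proof. intros E. generalize Cs C0. rewrite E. congruence. Qed.
Lemma inS_C x : inC x = true -> inS inC x = true.
Proof. intros H; unfold inS; rewrite H, orb_true_r; auto. Qed.
Lemma inS_0 : inS inC 0%nat = true.
Proof. reflexivity. Qed.
Lemma Sx_C x : Sx x = true -> inC x = true.
Proof. unfold Sx, avoid_s; intros H; apply andb_prop in H; tauto. Qed.
Lemma Sx_ne x : Sx x = true -> x <> s.
Proof. unfold Sx, avoid_s; intros H; apply andb_prop in H. destruct H as [_ H].
  apply negb_true_iff, Nat.eqb_neq in H; auto. Qed.
Lemma Sx_intro x : inC x = true -> x <> s -> Sx x = true.
Proof. intros H1 H2; unfold Sx, avoid_s; rewrite H1; simpl. apply negb_true_iff, Nat.eqb_neq; auto. Qed.

Lemma q_nonneg i j : i <> j -> inS inC i = true -> inS inC j = true -> 0 <= q i j.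
Proof. intros; apply Hstd; auto. Qed.

Lemma qtot_nonneg i : inS inC i = true -> 0 <= qtot q i.
Proof.
  intros H. destruct Hstd as [_ [_ [H3 _]]]. specialize (H3 i H).
  unfold qtot. apply nnsum_fin_nonneg in H3; auto.
Qed.

Lemma inS_cases x : inS inC x = true -> x = 0%nat \/ inC x = true.
Proof. unfold inS; intros H; apply orb_prop in H; destruct H as [H|H]; auto.
  left; apply Nat.eqb_eq; auto. Qed.

Lemma jumpP_nonneg i j : inS inC i = true -> inS inC j = true -> 0 <= jumpP q i j.
Proof.
  intros Hi Hj. unfold jumpP. destruct (i =? j)%nat eqn:E; [lra|].
  apply Nat.eqb_neq in E. unfold Rdiv. apply Rmult_le_pos.
  apply q_nonneg; auto. apply inv_nonneg, qtot_nonneg; auto.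
Qed.

Lemma pathw_nonneg k l : inS inC k = true -> Forall (fun x => inS inC x = true) l -> 0 <= pathw q k l.
Proof.
  revert k; induction l as [|x l IH]; intros k Hk Hl; simpl; [lra|].
  inversion Hl; subst. apply Rmult_le_pos; [apply jumpP_nonneg|apply IH]; auto.
Qed.

Lemma hits_nonneg T k l : inS inC k = true -> (forall x, T x = true -> inS inC x = true) ->
  hits Sx T l = true -> 0 <= pathw q k l.
Proof.
  intros Hk HT H. apply pathw_nonneg; auto. apply (hits_Forall Sx T (fun x => inS inC x = true) l); auto.
  intros x Hx; apply inS_C, Sx_C; auto.
Qed.

Lemma forallb_nonneg k : forallb Sx k = true -> 0 <= pathw q s k.
Proof.
  intros H. apply pathw_nonneg. apply inS_C, Cs. apply Forall_forall. intros x Hx.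
  rewrite forallb_forall in H. apply inS_C, Sx_C; auto.
Qed.

Lemma lst_C k : forallb Sx k = true -> inC (lst k) = true.
Proof.
  intros H. unfold lst. destruct (last_in s k s) as [E|E].
  - rewrite <- E; apply Cs.
  - rewrite forallb_forall in H. apply Sx_C; auto.
Qed.

Lemma lst_s k : forallb Sx k = true -> lst k = s -> k = [].
Proof.
  intros H E. destruct k as [|a k]; auto. exfalso.
  unfold lst in E. change (last (a :: k) s = s) in E.
  assert (Hin := last_in a k s). rewrite E in Hin.
  rewrite forallb_forall in H. apply (Sx_ne s); auto.
Qed.

Lemma lst_app1 k x : lst (k ++ [x]) = x.
Proof. unfold lst. change (s :: k ++ [x]) with ((s :: k) ++ [x]). apply last_last. Qed.

Lemma qtot_pos i : inC i = true -> 0 < qtot q i.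
Proof.
  intros Hi. destruct (Nat.eq_dec i s) as [->|Hne].
  - destruct (Rle_lt_dec (qtot q s) 0) as [Hle|]; auto. exfalso.
    assert (Hq : qtot q s = 0) by (generalize (qtot_nonneg s (inS_C _ Cs)); lra).
    destruct HB as [_ [[p [Hp [Hk _]]] _]].
    destruct (Hk s Cs) as [pk [Hpk Hle']].
    assert (Z : p_hit q inC s s = Fin 0).
    { unfold p_hit, hitprob. apply nnsum_zero. intros l.
      destruct (hits _ _ l) eqn:Eh; auto. destruct l as [|x l]; [discriminate|]. simpl.
      unfold jumpP. destruct (s =? x)%nat; [ring|]. unfold Rdiv. rewrite Hq, Rinv_0. ring. }
    rewrite Z in Hpk. injection Hpk; intros; lra.
  - destruct Hstd as [_ [_ [H3 [H4 [H5 _]]]]].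
    destruct (H5 i s Hi Cs) as [l [Hl Hlast]].
    destruct l as [|y l]; [simpl in Hlast; congruence|].
    destruct Hl as [Hiy [HyS [Hqy _]]].
    specialize (H3 i (inS_C _ Hi)).
    assert (q i y <= - q i i).
    { eapply (nnsum_term_le (fun j => if inS inC j && negb (j =? i)%nat then q i j else 0) _ y) in H3.
      - rewrite HyS in H3. simpl in H3. rewrite (proj2 (Nat.eqb_neq y i)) in H3 by auto. simpl in H3. auto.
      - intros j. destruct (inS inC j) eqn:Ej; simpl; [|lra].
        destruct (j =? i)%nat eqn:Eji; simpl; [lra|]. apply Nat.eqb_neq in Eji.
        apply q_nonneg; auto. apply inS_C; auto. }
    unfold qtot; lra.
Qed.


Definition U (phi : list nat -> bool) (i : nat) : ereal :=
  nnsum (fun k => if forallb Sx k && phi k && (lst k =? i)%nat then pathw q s k else 0).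

Lemma U_s phi : phi [] = true -> U phi s = Fin 1.
Proof.
  intros H. unfold U. rewrite (nnsum_single _ []).
  - simpl. rewrite H. unfold lst; simpl. rewrite Nat.eqb_refl. reflexivity.
  - intros k Hk. destruct (forallb Sx k && phi k && (lst k =? s)%nat) eqn:E; auto.
    apply andb_prop in E. destruct E as [E1 E2]. apply andb_prop in E1. destruct E1 as [E1 _].
    apply Nat.eqb_eq in E2. exfalso; apply Hk. apply lst_s; auto.
  - simpl. rewrite H. unfold lst; simpl. rewrite Nat.eqb_refl. lra.
Qed.

Lemma U_notC phi i : inC i = false -> U phi i = Fin 0.
Proof.
  intros H. unfold U. apply nnsum_zero. intros k.
  destruct (forallb Sx k && phi k && (lst k =? i)%nat) eqn:E; auto.
  apply andb_prop in E. destruct E as [E1 E2]. apply andb_prop in E1. destruct E1 as [E1 _].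
  apply Nat.eqb_eq in E2. subst. rewrite lst_C in H; auto; discriminate.
Qed.

Lemma PBL phi h u : (forall i, U phi i = Fin (u i)) -> (forall i, inC i = true -> 0 <= h i) ->
  nnsum (fun k => if forallb Sx k && phi k then pathw q s k * h (lst k) else 0)
  = nnsum (fun i => h i * u i).
Proof.
  intros HU Hh. apply nnsum_block with (key := lst).
  - intros k. destruct (forallb Sx k) eqn:E; simpl; [|lra].
    destruct (phi k); [|lra]. apply Rmult_le_pos. apply forallb_nonneg; auto. apply Hh, lst_C; auto.
  - intros b. destruct (inC b) eqn:Hb.
    + rewrite (nnsum_ext _ (fun k => h b * (if forallb Sx k && phi k && (lst k =? b)%nat then pathw q s k else 0))).
      * apply nnsum_scal; [apply Hh; auto| exact (HU b)].
      * intros k. destruct (cdec (lst k) b) as [E|E].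
        -- subst. rewrite Nat.eqb_refl, andb_true_r. destruct (forallb Sx k && phi k); ring.
        -- rewrite (proj2 (Nat.eqb_neq _ _) E), andb_false_r. ring.
    + assert (Hu : u b = 0). { generalize (U_notC phi b Hb). rewrite HU. congruence. }
      rewrite Hu, Rmult_0_r. apply nnsum_zero. intros k.
      destruct (cdec (lst k) b) as [E|E]; auto. subst.
      destruct (forallb Sx k) eqn:E1; simpl; auto. rewrite lst_C in Hb; auto; discriminate.
Qed.

Lemma pathw_single k x : pathw q k [x] = jumpP q k x.
Proof. simpl. ring. Qed.

Lemma DEC T G H : (forall x, T x = true -> inS inC x = true) -> (forall l, 0 <= G l) ->
  (forall k, forallb Sx k = true ->
     nnsum (fun x => if T x then jumpP q (lst k) x * G (k ++ [x]) else 0) = Fin (H k)) ->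
  nnsum (fun l => if hits Sx T l then pathw q s l * G l else 0) =
  nnsum (fun k => if forallb Sx k then pathw q s k * H k else 0).
Proof.
  intros HT HG HH. apply nnsum_block with (key := @removelast nat).
  - intros l. destruct (hits Sx T l) eqn:E; [|lra]. apply Rmult_le_pos; auto.
    apply (hits_nonneg T); auto. apply inS_C, Cs.
  - intros b. rewrite (nnsum_reindex _ (fun x => b ++ [x])).
    + rewrite (nnsum_ext _ (fun x => if forallb Sx b then pathw q s b *
          (if T x then jumpP q (lst b) x * G (b ++ [x]) else 0) else 0)).
      * destruct (forallb Sx b) eqn:Eb.
        -- apply nnsum_scal; auto. apply forallb_nonneg; auto.
        -- apply nnsum_zero; auto.
      * intros x. rewrite removelast_last. destruct (cdec b b) as [_|C]; [|congruence].
        rewrite hits_app1, pathw_app. 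
        destruct (forallb Sx b); simpl andb; [|reflexivity].
        destruct (T x); [|ring]. unfold lst. rewrite pathw_single. ring.
    + intros l. destruct (cdec (removelast l) b); [|lra].
      destruct (hits Sx T l) eqn:E; [|lra]. apply Rmult_le_pos; auto.
      apply (hits_nonneg T); auto. apply inS_C, Cs.
    + intros x y E. apply app_inv_head in E. injection E; auto.
    + intros l Hl. destruct (cdec (removelast l) b) as [E|E]; [|lra].
      destruct (hits Sx T l) eqn:Eh; [|lra].
      exists (last l 0%nat). subst b. symmetry. apply app_removelast_last.
      intros ->; discriminate.
Qed.

Definition m i := pi i * qtot q i.

Lemma pi_nonneg i : inC i = true -> 0 <= pi i.
Proof. apply Hpi. Qed.

Lemma m_nonneg i : inC i = true -> 0 <= m i.
Proof. intros H; unfold m; apply Rmult_le_pos; [apply pi_nonneg|apply qtot_nonneg, inS_C]; auto. Qed.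

Lemma ST1 j : Sx j = true ->
  nnsum (fun i => if inC i && negb (i =? j)%nat then m i * jumpP q i j else 0) = Fin (m j).
Proof.
  intros Hj. destruct Hpi as [_ [_ H3]]. specialize (H3 j (Sx_C _ Hj)).
  assert (Hd : dirac s j = 0). { unfold dirac. rewrite (proj2 (Nat.eqb_neq j s)); auto. apply Sx_ne; auto. }
  rewrite (nnsum_ext _ (fun i => if inC i && negb (i =? j)%nat then pi i * qret q (dirac s) i j else 0)).
  - rewrite H3. f_equal. unfold qret, m, qtot. rewrite Hd. ring.
  - intros i. destruct (inC i) eqn:Ei; simpl; auto.
    destruct (i =? j)%nat eqn:Eij; simpl; auto.
    unfold qret, m, jumpP. rewrite Eij, Hd. assert (0 < qtot q i) by (apply qtot_pos; auto).
    field. lra.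
Qed.

Lemma ST2 :
  nnsum (fun i => if Sx i then m i * (jumpP q i s + jumpP q i 0%nat) else 0)
  = Fin (m s * (1 - jumpP q s 0%nat)).
Proof.
  destruct Hpi as [_ [_ H3]]. specialize (H3 s Cs).
  assert (Hd : dirac s s = 1). { unfold dirac. rewrite Nat.eqb_refl; auto. }
  rewrite (nnsum_ext _ (fun i => if inC i && negb (i =? s)%nat then pi i * qret q (dirac s) i s else 0)).
  - rewrite H3. f_equal. unfold qret, m, jumpP. rewrite Hd.
    rewrite (proj2 (Nat.eqb_neq s 0%nat)) by apply s_ne0.
    assert (0 < qtot q s) by (apply qtot_pos, Cs). unfold qtot in *. field. lra.
  - intros i. unfold Sx, avoid_s. destruct (inC i) eqn:Ei; simpl; auto.
    destruct (i =? s)%nat eqn:Eis; simpl; auto.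
    assert (Ei0 : (i =? 0)%nat = false). { apply Nat.eqb_neq. intros ->. rewrite C0 in Ei; discriminate. }
    unfold qret, m, jumpP. rewrite Eis, Ei0, Hd. assert (0 < qtot q i) by (apply qtot_pos; auto).
    field. lra.
Qed.

Lemma pterm1 j : inC j = true -> p_term q inC s j = Fin 1.
Proof.
  intros Hj. destruct HB as [_ [_ H]]. specialize (H j Hj). unfold T_hit in H.
  destruct excluded_middle_informative; auto. congruence.
Qed.


Definition phin (n : nat) := fun k : list nat => (length k <=? n)%nat.
Definition phia := fun _ : list nat => true.

Lemma jumpP_pos x y : inC x = true -> x <> y -> 0 < q x y -> 0 < jumpP q x y.
Proof.
  intros Hx Hxy Hq. unfold jumpP. rewrite (proj2 (Nat.eqb_neq x y) Hxy).
  unfold Rdiv. apply Rmult_lt_0_compat; auto. apply Rinv_0_lt_compat, qtot_pos; auto.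
Qed.

Lemma jumpP_diag x : jumpP q x x = 0.
Proof. unfold jumpP. rewrite Nat.eqb_refl. auto. Qed.

Lemma U_rec phi phi' j u : Sx j = true -> (forall i, U phi i = Fin (u i)) ->
  (forall k x, phi' (k ++ [x]) = phi k) ->
  U phi' j = nnsum (fun i => jumpP q i j * u i).
Proof.
  intros Hj HU Hphi.
  assert (HjC : inC j = true) by (apply Sx_C; auto).
  assert (Hjs : j <> s) by (apply Sx_ne; auto).
  unfold U. rewrite (nnsum_ext _ (fun l => if hits Sx (fun x => (x =? j)%nat) l
        then pathw q s l * (if phi' l then 1 else 0) else 0)).
  2:{ intros l. induction l as [|x l _] using rev_ind.
      - unfold lst; simpl. rewrite (proj2 (Nat.eqb_neq s j)) by auto. rewrite andb_false_r. reflexivity.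
      - rewrite hits_app1, lst_app1, forallb_app. simpl forallb.
        destruct (x =? j)%nat eqn:Ex.
        + apply Nat.eqb_eq in Ex; subst. rewrite Hj. simpl.
          destruct (forallb Sx l); simpl; [|reflexivity]. destruct (phi' (l ++ [j])); simpl; ring.
        + rewrite !andb_false_r. reflexivity. }
  rewrite (DEC _ _ (fun k => jumpP q (lst k) j * (if phi k then 1 else 0))).
  - rewrite (nnsum_ext _ (fun k => if forallb Sx k && phi k then pathw q s k * jumpP q (lst k) j else 0)).
    + apply (PBL phi (fun i => jumpP q i j) u); auto. intros i Hi. apply jumpP_nonneg; apply inS_C; auto.
    + intros k. destruct (forallb Sx k); simpl; auto. destruct (phi k); ring.
  - intros x Hx. apply Nat.eqb_eq in Hx; subst. apply inS_C; auto.
  - intros l; destruct (phi' l); lra.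
  - intros k Hk. rewrite (nnsum_single _ j).
    + rewrite Nat.eqb_refl, Hphi. reflexivity.
    + intros x Hx. rewrite (proj2 (Nat.eqb_neq x j) Hx). auto.
    + rewrite Nat.eqb_refl. apply Rmult_le_pos. apply jumpP_nonneg; apply inS_C; auto. apply lst_C; auto.
      destruct (phi' _); lra.
Qed.

Lemma HIT T h u : (forall x, T x = true -> inS inC x = true) ->
  (forall i, inC i = true -> nnsum (fun x => if T x then jumpP q i x else 0) = Fin (h i)) ->
  (forall i, inC i = true -> 0 <= h i) ->
  (forall i, U phia i = Fin (u i)) ->
  nnsum (fun l => if hits Sx T l then pathw q s l else 0) = nnsum (fun i => h i * u i).
Proof.
  intros HT Hh Hh0 HU.
  rewrite (nnsum_ext _ (fun l => if hits Sx T l then pathw q s l * 1 else 0)).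
  2:{ intros l; destruct (hits Sx T l); ring. }
  rewrite (DEC _ _ (fun k => h (lst k))); auto.
  - rewrite (nnsum_ext _ (fun k => if forallb Sx k && phia k then pathw q s k * h (lst k) else 0)).
    + apply (PBL phia h u); auto.
    + intros k; unfold phia; rewrite andb_true_r; auto.
  - intros; lra.
  - intros k Hk. rewrite <- Hh by (apply lst_C; auto). apply nnsum_ext. intros x.
    destruct (T x); ring.
Qed.

Lemma PROP (wv : nat -> R) : wv s = 0 ->
  (forall x y, Sx x = true -> inC y = true -> x <> y -> 0 < q x y -> wv y = 0 -> wv x = 0) ->
  forall x, inC x = true -> wv x = 0.
Proof.
  intros Hs Hp x Hx. destruct (Nat.eq_dec x s) as [->|Hxs]; auto.
  destruct Hstd as [_ [_ [_ [H4 [H5 _]]]]].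
  destruct (H5 x s Hx Cs) as [l [Hl Hlast]].
  clear Hxs. revert x Hx Hl Hlast. induction l as [|y l IH]; intros x Hx Hl Hlast.
  - simpl in Hlast; subst; auto.
  - destruct Hl as [Hxy [Hy [Hq Hl]]].
    assert (Hlast' : last (y :: l) y = s).
    { rewrite <- Hlast. change (last (y :: l) y = last (y :: l) x). apply last_default. }
    destruct (inC y) eqn:Ey.
    + assert (wv y = 0) by (apply IH; auto).
      destruct (Nat.eq_dec x s) as [->|Hxs]; auto.
      apply (Hp x y); auto. apply Sx_intro; auto.
    + exfalso. destruct (inS_cases y Hy) as [->|C]; [|congruence].
      destruct l as [|z l].
      * simpl in Hlast'. generalize Cs. rewrite <- Hlast'. rewrite C0. discriminate.
      * destruct Hl as [_ [_ [Hqz _]]]. rewrite H4 in Hqz. lra.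
Qed.

Lemma ST1_nonneg j i : inS inC j = true -> 0 <= (if inC i && negb (i =? j)%nat then m i * jumpP q i j else 0).
Proof.
  intros Hj. destruct (inC i) eqn:Ei; simpl; [|lra]. destruct (negb _); [|lra].
  apply Rmult_le_pos. apply m_nonneg; auto. apply jumpP_nonneg; auto. apply inS_C; auto.
Qed.

Lemma ST2_nonneg i : 0 <= (if Sx i then m i * (jumpP q i s + jumpP q i 0%nat) else 0).
Proof.
  destruct (Sx i) eqn:Ei; [|lra]. assert (inC i = true) by (apply Sx_C; auto).
  apply Rmult_le_pos. apply m_nonneg; auto.
  assert (0 <= jumpP q i s) by (apply jumpP_nonneg; apply inS_C; auto; apply Cs).
  assert (0 <= jumpP q i 0%nat) by (apply jumpP_nonneg; [apply inS_C; auto| reflexivity]). lra.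
Qed.

Lemma pi_sum : nnsum (fun k => if inC k then pi k else 0) = Fin 1.
Proof. apply Hpi. Qed.

Lemma ms_pos : 0 < m s.
Proof.
  destruct (Rle_lt_dec (m s) 0) as [Hle|]; auto. exfalso.
  assert (Hm0 : m s = 0) by (generalize (m_nonneg s Cs); lra).
  assert (Hz : forall x, inC x = true -> m x = 0).
  { apply PROP; auto. intros x y Hx Hy Hxy Hq Hmy.
    assert (HxC : inC x = true) by (apply Sx_C; auto).
    assert (Hp := jumpP_pos x y HxC Hxy Hq).
    assert (0 <= m x) by (apply m_nonneg; auto).
    destruct (Nat.eq_dec y s) as [->|Hys].
    - assert (T := nnsum_term_le _ _ x ST2_nonneg ST2).
      cbv beta in T. rewrite Hx, Hm0 in T.
      assert (0 <= jumpP q x 0%nat) by (apply jumpP_nonneg; [apply inS_C; auto| reflexivity]).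
      nra.
    - assert (Hy' : Sx y = true) by (apply Sx_intro; auto).
      assert (T := nnsum_term_le _ _ x (fun i => ST1_nonneg y i ltac:(apply inS_C; auto)) (ST1 y Hy')).
      cbv beta in T. rewrite HxC, (proj2 (Nat.eqb_neq x y) Hxy) in T. simpl in T. rewrite Hmy in T. nra. }
  assert (nnsum (fun k => if inC k then pi k else 0) = Fin 0).
  { apply nnsum_zero. intros k. destruct (inC k) eqn:Ek; auto.
    specialize (Hz k Ek). unfold m in Hz. assert (0 < qtot q k) by (apply qtot_pos; auto). nra. }
  rewrite pi_sum in H. injection H; lra.
Qed.

Definition un n x := match U (phin n) x with Fin r => r | Inf => 0 end.

Lemma phin_S n k x : phin (S n) (k ++ [x]) = phin n k.
Proof. unfold phin. rewrite length_app. simpl. rewrite Nat.add_1_r. reflexivity. Qed.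

Lemma stepC : forall n i, U (phin n) i = Fin (un n i) /\ (inC i = true -> m s * un n i <= m i)
   /\ (inC i = false -> un n i = 0).
Proof.
  assert (Hms := ms_pos).
  induction n as [|n IH]; intros i; unfold un.
  - destruct (inC i) eqn:Ei.
    + destruct (Nat.eq_dec i s) as [->|Hne].
      * rewrite U_s by reflexivity. repeat split; try lra; discriminate.
      * assert (E : U (phin 0) i = Fin 0).
        { unfold U. apply nnsum_zero. intros k. unfold phin.
          destruct k as [|a k]; simpl.
          - unfold lst; simpl. rewrite (proj2 (Nat.eqb_neq s i)) by auto. reflexivity.
          - rewrite andb_false_r; simpl; auto. }
        rewrite E. repeat split; try discriminate. intros _. rewrite Rmult_0_r. apply m_nonneg; auto.
    + rewrite U_notC by auto. repeat split; auto; try discriminate.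
  - destruct (inC i) eqn:Ei.
    + destruct (Nat.eq_dec i s) as [->|Hne].
      * rewrite U_s by reflexivity. repeat split; try lra; discriminate.
      * assert (HiS : Sx i = true) by (apply Sx_intro; auto).
        rewrite (U_rec (phin n) (phin (S n)) i (un n)); auto.
        2:{ intros x; apply IH. }
        2:{ apply phin_S. }
        destruct (nnsum_le_fin (fun x => jumpP q x i * un n x)
           (fun x => / m s * (if inC x && negb (x =? i)%nat then m x * jumpP q x i else 0)) (/ m s * m i))
          as [r [Hr Hr']].
        { intros x. destruct (IH x) as [_ [H1 H2]].
          destruct (inC x) eqn:Ex; simpl.
          - destruct (x =? i)%nat eqn:Exi; simpl.
            + apply Nat.eqb_eq in Exi; subst. rewrite jumpP_diag. lra.
            + assert (0 <= jumpP q x i) by (apply jumpP_nonneg; apply inS_C; auto).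
              specialize (H1 eq_refl).
              assert (/ m s * (m x * jumpP q x i) - jumpP q x i * un n x =
                      jumpP q x i / m s * (m x - m s * un n x)) by (field; lra).
              assert (0 <= jumpP q x i / m s * (m x - m s * un n x)).
              { apply Rmult_le_pos; [|lra]. unfold Rdiv. apply Rmult_le_pos; auto.
                left; apply Rinv_0_lt_compat; auto. }
              lra.
          - rewrite H2 by auto. lra. }
        { apply nnsum_scal. left; apply Rinv_0_lt_compat; auto. apply ST1; auto. }
        rewrite Hr. repeat split; try discriminate. intros _.
        apply (Rmult_le_compat_l (m s)) in Hr'; [|lra].
        replace (m s * (/ m s * m i)) with (m i) in Hr' by (field; lra). auto.
    + rewrite U_notC by auto. repeat split; auto; try discriminate.
Qed.

Lemma maxlen_in (L : list (list nat)) k : In k L -> (length k <= fold_right Nat.max 0%nat (map (@length nat) L))%nat.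
Proof. induction L as [|a L IH]; simpl; [tauto|]. intros [->|H]; [lia|]. specialize (IH H); lia. Qed.

Definition uval x := match U phia x with Fin r => r | Inf => 0 end.

Lemma stepD i : U phia i = Fin (uval i) /\ (inC i = true -> m s * uval i <= m i)
   /\ (inC i = false -> uval i = 0).
Proof.
  assert (Hms := ms_pos). unfold uval.
  destruct (inC i) eqn:Ei.
  - destruct (nnsum_ub_fin (fun k => if forallb Sx k && phia k && (lst k =? i)%nat then pathw q s k else 0)
       (m i / m s)) as [r [Hr Hr']].
    { intros L HL. set (n := fold_right Nat.max 0%nat (map (@length nat) L)).
      rewrite (fs_ext _ (fun k => if forallb Sx k && phin n k && (lst k =? i)%nat then pathw q s k else 0)).
      - destruct (stepC n i) as [H1 [H2 _]].
        apply Rle_trans with (un n i). apply (nnsum_ubs _ _ H1); auto.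
        specialize (H2 Ei). apply (Rmult_le_reg_l (m s)); auto.
        replace (m s * (m i / m s)) with (m i) by (field; lra). auto.
      - intros k Hk. unfold phia, phin. rewrite (proj2 (Nat.leb_le (length k) n) (maxlen_in L k Hk)). auto. }
    assert (HU : U phia i = Fin r) by exact Hr. rewrite HU. repeat split; try discriminate. intros _.
    apply (Rmult_le_compat_l (m s)) in Hr'; [|lra].
    replace (m s * (m i / m s)) with (m i) in Hr' by (field; lra). auto.
  - rewrite U_notC by auto. repeat split; auto; try discriminate.
Qed.

Lemma uval_s : uval s = 1.
Proof. unfold uval. rewrite U_s; reflexivity. Qed.

Lemma uval_nonneg i : 0 <= uval i.
Proof. destruct (stepD i) as [H _]. apply nnsum_fin_nonneg in H; auto. Qed.

Lemma Urec j : Sx j = true -> nnsum (fun x => jumpP q x j * uval x) = Fin (uval j).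
Proof.
  intros Hj. rewrite <- (U_rec phia phia j uval); auto.
  apply stepD. intros; apply stepD.
Qed.

Lemma Pterm_u : nnsum (fun i => (jumpP q i s + jumpP q i 0%nat) * uval i) = Fin 1.
Proof.
  rewrite <- (HIT Ex).
  - apply (pterm1 s Cs).
  - intros x Hx. unfold Ex in Hx. apply orb_prop in Hx. destruct Hx as [Hx|Hx]; apply Nat.eqb_eq in Hx; subst.
    apply inS_C, Cs. reflexivity.
  - intros i Hi. rewrite (nnsum_fs _ [s; 0%nat]).
    + unfold fs; simpl. unfold Ex. rewrite Nat.eqb_refl. simpl.
      rewrite orb_true_r.
      simpl. f_equal; ring.
    + repeat constructor; simpl; intuition. apply s_ne0; auto.
    + intros x Hx. unfold Ex. destruct (x =? s)%nat eqn:E1; [apply Nat.eqb_eq in E1; subst; exfalso; apply Hx; left; auto|].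
      destruct (x =? 0)%nat eqn:E2; [apply Nat.eqb_eq in E2; subst; exfalso; apply Hx; right; left; auto|]. auto.
    + intros x. unfold Ex. destruct (x =? s)%nat eqn:E1.
      * apply Nat.eqb_eq in E1; subst. apply jumpP_nonneg; apply inS_C; auto. apply Cs.
      * destruct (x =? 0)%nat eqn:E2; simpl; [|lra]. apply Nat.eqb_eq in E2; subst.
        apply jumpP_nonneg; [apply inS_C; auto| reflexivity].
  - intros i Hi. 
    assert (0 <= jumpP q i s) by (apply jumpP_nonneg; apply inS_C; auto; apply Cs).
    assert (0 <= jumpP q i 0%nat) by (apply jumpP_nonneg; [apply inS_C; auto| reflexivity]). lra.
  - intros; apply stepD.
Qed.

Lemma Phit_u ps : p_hit q inC s s = Fin ps -> nnsum (fun i => jumpP q i s * uval i) = Fin ps.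
Proof.
  intros H. rewrite <- (HIT (fun x => (x =? s)%nat)).
  - apply H.
  - intros x Hx. apply Nat.eqb_eq in Hx; subst. apply inS_C, Cs.
  - intros i Hi. rewrite (nnsum_single _ s).
    + rewrite Nat.eqb_refl. reflexivity.
    + intros x Hx. rewrite (proj2 (Nat.eqb_neq x s) Hx). auto.
    + rewrite Nat.eqb_refl. apply jumpP_nonneg; apply inS_C; auto. apply Cs.
  - intros i Hi. apply jumpP_nonneg; apply inS_C; auto. apply Cs.
  - intros; apply stepD.
Qed.

Lemma stepE x : inC x = true -> m x = m s * uval x.
Proof.
  intros Hx. assert (Hms := ms_pos).
  assert (H := PROP (fun x => m x - m s * uval x)). cbv beta in H.
  enough (m x - m s * uval x = 0) by lra. apply H; auto.
  { rewrite uval_s; ring. }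
  clear x Hx H. intros x y Hx Hy Hxy Hq Hwy.
  assert (HxC : inC x = true) by (apply Sx_C; auto).
  assert (Hp := jumpP_pos x y HxC Hxy Hq).
  assert (Hw0 : 0 <= m x - m s * uval x) by (destruct (stepD x) as [_ [H _]]; specialize (H HxC); lra).
  destruct (Nat.eq_dec y s) as [->|Hys].
  - set (f := fun i => if inC i then m i * (jumpP q i s + jumpP q i 0%nat) else 0).
    assert (Hf : nnsum f = Fin (m s)).
    { rewrite (nnsum_ext _ (fun i => (if Sx i then m i * (jumpP q i s + jumpP q i 0%nat) else 0) +
          (if (i =? s)%nat then m s * (jumpP q s s + jumpP q s 0%nat) else 0))).
      - replace (m s) with (m s * (1 - jumpP q s 0%nat) + m s * (jumpP q s s + jumpP q s 0%nat))
          at 1 by (rewrite jumpP_diag; ring).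
        apply nnsum_add.
        + apply ST2_nonneg.
        + intros i. destruct (i =? s)%nat; [|lra]. rewrite jumpP_diag. apply Rmult_le_pos; [lra|]. rewrite Rplus_0_l.
          apply jumpP_nonneg; [apply inS_C, Cs|reflexivity].
        + apply ST2.
        + rewrite (nnsum_single _ s). rewrite Nat.eqb_refl; reflexivity.
          intros i Hi; rewrite (proj2 (Nat.eqb_neq i s) Hi); auto.
          rewrite Nat.eqb_refl, jumpP_diag. apply Rmult_le_pos; [lra|].
          rewrite Rplus_0_l. apply jumpP_nonneg; [apply inS_C, Cs|reflexivity].
      - intros i. unfold f, Sx, avoid_s. destruct (inC i) eqn:Ei; simpl.
        + destruct (i =? s)%nat eqn:E; simpl.
          * apply Nat.eqb_eq in E; subst. ring.
          * ring.
        + destruct (i =? s)%nat eqn:E; [apply Nat.eqb_eq in E; subst; rewrite Cs in Ei; discriminate| ring]. }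
    assert (Hg : nnsum (fun i => m s * ((jumpP q i s + jumpP q i 0%nat) * uval i)) = Fin (m s * 1)).
    { apply nnsum_scal; [lra|]. apply Pterm_u. }
    assert (Hle : forall i, m s * ((jumpP q i s + jumpP q i 0%nat) * uval i) <= f i).
    { intros i. unfold f. destruct (stepD i) as [_ [H1 H2]]. destruct (inC i) eqn:Ei.
      - specialize (H1 eq_refl).
        assert (0 <= jumpP q i s) by (apply jumpP_nonneg; apply inS_C; auto; apply Cs).
        assert (0 <= jumpP q i 0%nat) by (apply jumpP_nonneg; [apply inS_C; auto| reflexivity]).
        nra.
      - rewrite H2 by auto. lra. }
    assert (Hg0 : forall i, 0 <= m s * ((jumpP q i s + jumpP q i 0%nat) * uval i)).
    { intros i. destruct (stepD i) as [_ [_ H2]]. destruct (inC i) eqn:Ei.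
      - assert (0 <= jumpP q i s) by (apply jumpP_nonneg; apply inS_C; auto; apply Cs).
        assert (0 <= jumpP q i 0%nat) by (apply jumpP_nonneg; [apply inS_C; auto| reflexivity]).
        generalize (uval_nonneg i); intros; apply Rmult_le_pos; [lra| apply Rmult_le_pos; lra].
      - rewrite H2 by auto. lra. }
    assert (Hs := nnsum_sub _ _ _ _ Hg0 Hle Hf Hg).
    assert (Hnn : forall i, 0 <= f i - m s * ((jumpP q i s + jumpP q i 0%nat) * uval i))
      by (intros i; specialize (Hle i); lra).
    assert (T := nnsum_term_le _ _ x Hnn Hs).
    cbv beta in T. unfold f in T. rewrite HxC in T.
    assert (0 <= jumpP q x 0%nat) by (apply jumpP_nonneg; [apply inS_C; auto| reflexivity]).
    nra.
  - assert (Hy' : Sx y = true) by (apply Sx_intro; auto).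
    set (f := fun i => if inC i && negb (i =? y)%nat then m i * jumpP q i y else 0).
    assert (Hg : nnsum (fun i => m s * (jumpP q i y * uval i)) = Fin (m s * uval y)).
    { apply nnsum_scal; [lra|]. apply Urec; auto. }
    assert (Hle : forall i, m s * (jumpP q i y * uval i) <= f i).
    { intros i. unfold f. destruct (stepD i) as [_ [H1 H2]]. destruct (inC i) eqn:Ei; simpl.
      - specialize (H1 eq_refl). destruct (i =? y)%nat eqn:Eiy; simpl.
        + apply Nat.eqb_eq in Eiy; subst. rewrite jumpP_diag. lra.
        + assert (0 <= jumpP q i y) by (apply jumpP_nonneg; apply inS_C; auto). nra.
      - rewrite H2 by auto. lra. }
    assert (Hg0 : forall i, 0 <= m s * (jumpP q i y * uval i)).
    { intros i. destruct (stepD i) as [_ [_ H2]]. destruct (inC i) eqn:Ei.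
      - assert (0 <= jumpP q i y) by (apply jumpP_nonneg; apply inS_C; auto).
        generalize (uval_nonneg i); intros; apply Rmult_le_pos; [lra| apply Rmult_le_pos; lra].
      - rewrite H2 by auto. lra. }
    assert (Hs := nnsum_sub _ _ _ _ Hg0 Hle (ST1 y Hy') Hg).
    assert (Hnn : forall i, 0 <= f i - m s * (jumpP q i y * uval i))
      by (intros i; specialize (Hle i); lra).
    assert (T := nnsum_term_le _ _ x Hnn Hs).
    cbv beta in T. unfold f in T. rewrite HxC, (proj2 (Nat.eqb_neq x y) Hxy) in T. simpl in T.
    nra.
Qed.

Lemma fs_zero {A} (l : list A) : fs (fun _ => 0) l = 0.
Proof. induction l; unfold fs in *; simpl; auto. rewrite IHl; ring. Qed.

Lemma lst_nonneg_inv k : forallb Sx k = true -> 0 <= / qtot q (lst k).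
Proof. intros H. apply inv_nonneg, qtot_nonneg, inS_C, lst_C; auto. Qed.

Lemma firstn_app_self (k r : list nat) : firstn (length k) (k ++ r) = k.
Proof. induction k; simpl; auto. rewrite IHk; auto. Qed.

Definition F1 (p : list nat * nat) : R :=
  if hits Sx Ex (fst p) && (snd p <? length (fst p))%nat
  then pathw q s (fst p) * / qtot q (lst (firstn (snd p) (fst p))) else 0.

Definition F3 (p : list nat * list nat) : R :=
  if forallb Sx (fst p) then pathw q s (fst p) * / qtot q (lst (fst p)) *
     (if hits Sx Ex (snd p) then pathw q (lst (fst p)) (snd p) else 0) else 0.

Lemma Ex_inS x : Ex x = true -> inS inC x = true.
Proof. unfold Ex; intros Hx. apply orb_prop in Hx. destruct Hx as [Hx|Hx]; apply Nat.eqb_eq in Hx; subst.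
  apply inS_C, Cs. reflexivity. Qed.

Lemma hits_forallb_prefix l n : hits Sx Ex l = true -> (n < length l)%nat -> forallb Sx (firstn n l) = true.
Proof.
  intros H Hn. destruct (hits_decomp _ _ _ H) as [k [x [-> [H1 _]]]].
  rewrite length_app in Hn; simpl in Hn.
  rewrite firstn_app. rewrite (proj2 (Nat.sub_0_le n (length k))) by lia. simpl. rewrite app_nil_r.
  rewrite forallb_forall in *. intros y Hy. apply H1.
  rewrite <- (firstn_skipn n k). apply in_or_app; auto.
Qed.

Lemma F1_nonneg p : 0 <= F1 p.
Proof.
  unfold F1. destruct (hits Sx Ex (fst p)) eqn:E; simpl; [|lra].
  destruct (snd p <? length (fst p))%nat eqn:E2; [|lra]. apply Nat.ltb_lt in E2.
  apply Rmult_le_pos. apply (hits_nonneg Ex); auto. apply inS_C, Cs. apply Ex_inS.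
  apply lst_nonneg_inv. apply hits_forallb_prefix; auto.
Qed.

Lemma F3_nonneg p : 0 <= F3 p.
Proof.
  unfold F3. destruct (forallb Sx (fst p)) eqn:E; [|lra].
  apply Rmult_le_pos; [apply Rmult_le_pos|].
  apply forallb_nonneg; auto. apply lst_nonneg_inv; auto.
  destruct (hits Sx Ex (snd p)) eqn:E2; [|lra]. apply (hits_nonneg Ex); auto.
  apply inS_C, lst_C; auto. apply Ex_inS.
Qed.

Lemma Mterm : m_term q inC s s = nnsum (fun i => / qtot q i * uval i).
Proof.
  unfold m_term.
  transitivity (nnsum F1).
  { symmetry. apply (nnsum_block F1 fst). apply F1_nonneg.
    intros L. set (K := map (fun n => (L, n)) (seq 0 (length L))).
    rewrite (nnsum_fs _ K).
    - unfold K. rewrite fs_map. destruct (cdec L L) as [_|C]; [|congruence].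
      change (hits (avoid_s inC s) (fun x => ((x =? s)%nat || (x =? 0)%nat)) L) with (hits Sx Ex L).
      destruct (hits Sx Ex L) eqn:Eh.
      + rewrite pathtime_fs, <- fs_scal. f_equal. apply fs_ext. intros n Hn.
        apply in_seq in Hn. simpl. destruct (cdec L L) as [_|C]; [|congruence]. unfold F1; simpl. rewrite Eh.
        rewrite (proj2 (Nat.ltb_lt n (length L))) by lia. reflexivity.
      + rewrite <- (fs_zero (seq 0 (length L))). f_equal. apply fs_ext. intros n _.
        simpl. destruct (cdec L L) as [_|C]; [|congruence]. unfold F1; simpl. rewrite Eh. reflexivity.
    - unfold K. apply NoDup_map_NoDup_ForallPairs. intros x y _ _ E; injection E; auto. apply seq_NoDup.
    - intros [L' n] Hn. simpl. destruct (cdec L' L) as [->|]; auto.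
      unfold F1; simpl. destruct (n <? length L)%nat eqn:E; [|rewrite andb_false_r; auto].
      exfalso. apply Hn. unfold K. apply in_map. apply in_seq. apply Nat.ltb_lt in E. lia.
    - intros p. destruct (cdec (fst p) L); [apply F1_nonneg|lra]. }
  rewrite (nnsum_reindex F1 (fun kr : list nat * list nat => (fst kr ++ snd kr, length (fst kr)))).
  3:{ intros [k1 r1] [k2 r2] E. simpl in E. injection E; intros E2 E1.
      assert (k1 = k2).
      { rewrite <- (firstn_app_self k1 r1), <- (firstn_app_self k2 r2), E1, E2. reflexivity. }
      subst. apply app_inv_head in E1. subst; auto. }
  3:{ intros [L n] Hn. unfold F1 in Hn; simpl in Hn.
      destruct (n <? length L)%nat eqn:E; [|rewrite andb_false_r in Hn; lra].
      apply Nat.ltb_lt in E. exists (firstn n L, skipn n L). simpl.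
      rewrite firstn_skipn, firstn_length_le by lia. reflexivity. }
  2:{ apply F1_nonneg. }
  rewrite (nnsum_ext _ F3).
  2:{ intros [k r]. unfold F1, F3; simpl. destruct r as [|x r].
      - rewrite app_nil_r, Nat.ltb_irrefl, andb_false_r. simpl hits. destruct (forallb Sx k); ring.
      - rewrite hits_app by discriminate. rewrite length_app. simpl length.
        rewrite (proj2 (Nat.ltb_lt (length k) (length k + S (length r)))) by lia.
        rewrite firstn_app_self.
        rewrite pathw_app, andb_true_r. change (last (s :: k) s) with (lst k).
        destruct (forallb Sx k); [rewrite andb_true_l|rewrite andb_false_l; reflexivity].
        destruct (hits Sx Ex (x :: r)); ring. }
  rewrite (nnsum_block F3 fst (fun k => if forallb Sx k then pathw q s k * / qtot q (lst k) else 0)).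
  - rewrite (nnsum_ext _ (fun k => if forallb Sx k && phia k then pathw q s k * / qtot q (lst k) else 0)).
    + apply (PBL phia (fun i => / qtot q i) uval).
      * intros; apply stepD.
      * intros i Hi. apply inv_nonneg, qtot_nonneg, inS_C; auto.
    + intros k; unfold phia; rewrite andb_true_r; auto.
  - apply F3_nonneg.
  - intros k. rewrite (nnsum_reindex _ (fun r : list nat => (k, r))).
    + destruct (cdec k k) as [_|C]; [|congruence]. 
      destruct (forallb Sx k) eqn:Ek.
      * unfold F3; simpl. rewrite Ek. destruct (cdec k k) as [_|C]; [|congruence].
        replace (Fin (pathw q s k * / qtot q (lst k))) with (Fin (pathw q s k * / qtot q (lst k) * 1)) by (f_equal; ring).
        apply nnsum_scal.
        -- apply Rmult_le_pos. apply forallb_nonneg; auto. apply lst_nonneg_inv; auto.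
        -- exact (pterm1 (lst k) (lst_C k Ek)).
      * apply nnsum_zero. intros r. unfold F3; simpl. rewrite Ek. destruct (cdec k k); reflexivity.
    + intros p. destruct (cdec (fst p) k); [apply F3_nonneg|lra].
    + intros r1 r2 E; injection E; auto.
    + intros [k' r] H. simpl in H. destruct (cdec k' k) as [->|]; [|lra]. exists r; auto.
Qed.

Lemma uval_notC i : inC i = false -> uval i = 0.
Proof. intros H; apply stepD; auto. Qed.

Lemma main_sec : exists ps Ts, p_hit q inC s s = Fin ps /\ T_hit q inC s s = Fin Ts /\
    nnsum (fun k => if inC k then pi k * q k 0%nat else 0) = Fin ((1 - ps) / Ts).
Proof.
  assert (Hms := ms_pos).
  destruct HB as [_ [[p [_ [Hk _]]] _]]. destruct (Hk s Cs) as [ps [Hps _]].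
  assert (Hsum : nnsum (fun i => m s * (/ qtot q i * uval i)) = Fin 1).
  { rewrite <- pi_sum. apply nnsum_ext. intros i. destruct (inC i) eqn:Ei.
    - rewrite <- Rmult_assoc. rewrite (Rmult_comm (m s)). rewrite Rmult_assoc, <- stepE by auto.
      unfold m. assert (0 < qtot q i) by (apply qtot_pos; auto). field. lra.
    - rewrite uval_notC by auto. ring. }
  assert (HT : nnsum (fun i => / qtot q i * uval i) = Fin (/ m s)).
  { rewrite (nnsum_ext _ (fun i => / m s * (m s * (/ qtot q i * uval i)))).
    - replace (Fin (/ m s)) with (Fin (/ m s * 1)) by (f_equal; ring). apply nnsum_scal; auto. left; apply Rinv_0_lt_compat; auto.
    - intros i. rewrite <- Rmult_assoc, Rinv_l; [ring|lra]. }
  exists ps, (/ m s). split; auto. split.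
  - unfold T_hit. destruct excluded_middle_informative as [_|C].
    + rewrite Mterm. auto.
    + exfalso; apply C. apply pterm1, Cs.
  - assert (Hg0 : forall i, 0 <= jumpP q i s * uval i).
    { intros i. destruct (inC i) eqn:Ei.
      - apply Rmult_le_pos. apply jumpP_nonneg; apply inS_C; auto. apply Cs. apply uval_nonneg.
      - rewrite uval_notC by auto. lra. }
    assert (Hle : forall i, jumpP q i s * uval i <= (jumpP q i s + jumpP q i 0%nat) * uval i).
    { intros i. destruct (inC i) eqn:Ei.
      - assert (0 <= jumpP q i 0%nat) by (apply jumpP_nonneg; [apply inS_C; auto| reflexivity]).
        generalize (uval_nonneg i); nra.
      - rewrite uval_notC by auto. lra. }
    assert (H0 := nnsum_sub _ _ _ _ Hg0 Hle Pterm_u (Phit_u ps Hps)).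
    rewrite (nnsum_ext _ (fun k => m s * ((jumpP q k s + jumpP q k 0%nat) * uval k - jumpP q k s * uval k))).
    + rewrite (nnsum_scal _ _ _ (Rlt_le _ _ Hms) H0). f_equal. field. lra.
    + intros k. destruct (inC k) eqn:Ek.
      * assert (Hk0 : k <> 0%nat) by (intros ->; rewrite C0 in Ek; discriminate).
        unfold jumpP at 2. rewrite (proj2 (Nat.eqb_neq k 0%nat) Hk0).
        assert (Hm := stepE k Ek).
        assert (0 < qtot q k) by (apply qtot_pos; auto).
        replace (m s * ((jumpP q k s + q k 0%nat / qtot q k) * uval k - jumpP q k s * uval k))
          with (q k 0%nat / qtot q k * (m s * uval k)) by ring.
        rewrite <- Hm. unfold m. field. lra.
      * rewrite uval_notC by auto. ring.
Qed.
End Main.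

Theorem mainTheorem4 (q : nat -> nat -> R) (inC : nat -> bool) (s : nat)
  (pi : nat -> R) :
  standing q inC ->
  conditionB q inC s ->
  stationary inC (qret q (dirac s)) pi ->
  exists ps Ts, p_hit q inC s s = Fin ps /\ T_hit q inC s s = Fin Ts /\
    nnsum (fun k => if inC k then pi k * q k 0%nat else 0) = Fin ((1 - ps) / Ts).
Proof.
  intros H1 H2 H3. exact (main_sec q inC s pi H1 H2 H3).
Qed.
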